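(* Fix $(\mu,\sigma)\in S_\lambda\times\Omega$, and let $\widehat\sigma\in\Omega$ be such that the auxiliary TASEP transition probability $\mathbb P(\widehat\sigma\to\sigma)$ is positive. Then there is a family $(g^{\widehat\sigma}_{\widehat\mu})_{\widehat\mu\in S_\lambda}$ of functions $\mathbb R_{>1}\to\mathbb R$ with $g^{\widehat\sigma}_{\widehat\mu}(z)=O(1/z)$ as $z\to\infty$ such that, for all $R>1$, \[\sum_{\widehat\mu\in S_\lambda}\mathbb P\big((\widehat\mu,\widehat\sigma)\to(\mu,\sigma)\big)\,\Psi_{\widehat\mu}(\widehat\sigma\boldsymbol\chi)\,\big(1+g^{\widehat\sigma}_{\widehat\mu}(R)\big)=\Psi_\mu(\sigma\boldsymbol\chi)\,\mathbb P(\widehat\sigma\to\sigma),\] where the probabilities on the left are transition probabilities of $\blacktriangle\mathrm{iTASEP}_\lambda$ and $\boldsymbol\chi$ depends on $R$.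
   Context: Fix parameters $a_k\in(0,1)$ ($k\ge0$) and a nondecreasing tuple $\lambda$ of nonnegative integers with rearrangement set $S_\lambda$. For $w\in\mathfrak S_n$, $wy=(y_{w^{-1}(1)},\dots,y_{w^{-1}(n)})$ and $(wf)(\mathbf x)=f(w\mathbf x)$. Indices mod $n$; $\overline s_i$ ($i\in\mathbb Z/n\mathbb Z$) the transposition of $i,i+1$; $c=(1\,2\cdots n)$. Inhomogeneous TASEP polynomials $(\Psi_\mu(\mathbf x))_{\mu\in S_\lambda}$ (coefficients rational in the $a$'s) are determined up to a common scalar (fixed) by: $\frac{x_i(x_{i+1}-a_{\mu_{i+1}})}{a_{\mu_{i+1}}(x_i-x_{i+1})}(1-\overline s_i)\Psi_\mu=\Psi_{\overline s_i\mu}$ if $\mu_i<\mu_{i+1}$; $\overline s_i\Psi_\mu=\Psi_\mu$ if $\mu_i=\mu_{i+1}$; $c\Psi_{c\mu}=\Psi_\mu$. Stones $\blacktriangle_1,\dots,\blacktriangle_n$ with densities in $\{1,2\}$, $1=\varrho(\blacktriangle_1)\le\cdots\le\varrho(\blacktriangle_n)=2$. $\Omega$: the $\sigma\in\mathfrak S_n$ such that stones of each density appear in the same cyclic order in $\blacktriangle_{\sigma^{-1}(1)},\dots,\blacktriangle_{\sigma^{-1}(n)}$ as in $\blacktriangle_1,\dots,\blacktriangle_n$. $\mathfrak K(\sigma)=\#\{i:\varrho(\blacktriangle_{\sigma^{-1}(i)})<\varrho(\blacktriangle_{\sigma^{-1}(i+1)})\}$. Auxiliary TASEP on $\Omega$: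 $\mathbb P(\sigma\to\overline s_i\sigma)=1/n$ if $\varrho(\blacktriangle_{\sigma^{-1}(i)})<\varrho(\blacktriangle_{\sigma^{-1}(i+1)})$, $\mathbb P(\sigma\to\sigma)=1-\mathfrak K(\sigma)/n$, others $0$. For $j$ with $\varrho(\blacktriangle_j)=1$, $p(j)\in[0,1)$ fixed. For $R>1$, $\boldsymbol\chi=(\chi_j)$ with $\chi_j=1/p(j)$ if $\varrho(\blacktriangle_j)=1$ and $p(j)>0$, $\chi_j=R$ otherwise. $\blacktriangle\mathrm{iTASEP}_\lambda$ on $S_\lambda\times\Omega$: if $\varrho(\blacktriangle_{\sigma^{-1}(i)})<\varrho(\blacktriangle_{\sigma^{-1}(i+1)})$ and $\mu_i>\mu_{i+1}$, $\mathbb P((\mu,\sigma)\to(\overline s_i\mu,\overline s_i\sigma))=\frac1np(\sigma^{-1}(i))a_{\mu_i}$, $\mathbb P((\mu,\sigma)\to(\mu,\overline s_i\sigma))=\frac1n[1-p(\sigma^{-1}(i))a_{\mu_i}]$; if the density condition holds and $\mu_i\le\mu_{i+1}$, $\mathbb P((\mu,\sigma)\to(\mu,\overline s_i\sigma))=\frac1n$; $\mathbb P((\mu,\sigma)\to(\mu,\sigma))=1-\mathfrak K(\sigma)/n$; others $0$. *)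

(* Defs.v *)
From HB Require Import structures.
From mathcomp Require Import all_boot all_order all_algebra all_fingroup.
From mathcomp Require Import reals.
From mathcomp Require Import mpoly.
Set Implicit Arguments. Unset Strict Implicit. Unset Printing Implicit Defensive.
Import Order.TTheory GRing.Theory Num.Theory.
Local Open Scope ring_scope.

(* Positions are 'I_n (position j <-> paper's j+1).  Indices are taken mod n. *)

Definition nxt {n : nat} (i : 'I_n) : 'I_n := ordS i.

Definition sbar {n : nat} (i : 'I_n) : {perm 'I_n} := tperm i (nxt i).

Definition ccyc {n : nat} : {perm 'I_n} := perm (@ordS_inj n).

Definition actv {n : nat} {T : Type} (w : {perm 'I_n}) (y : 'I_n -> T) : 'I_n -> T :=
  fun j => y ((w^-1)%g j).

(* Compositions of permutations: the paper's w1 w2 (apply w2 first, then w1)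
   is mathcomp's (w2 * w1)%g. *)
Definition pcomp {n : nat} (w1 w2 : {perm 'I_n}) : {perm 'I_n} := (w2 * w1)%g.

Notation cfg n := {ffun 'I_n -> nat}.

Definition actc {n : nat} (w : {perm 'I_n}) (mu : cfg n) : cfg n :=
  [ffun j => mu ((w^-1)%g j)].

Definition Slam {n : nat} (lam : cfg n) : seq (cfg n) :=
  undup [seq actc w lam | w <- enum {perm 'I_n}].

Definition nondecr {n : nat} (lam : cfg n) : Prop :=
  forall i j : 'I_n, (i <= j)%N -> (lam i <= lam j)%N.

(* Inhomogeneous TASEP polynomials: a family of real polynomials in x_1..x_n
   satisfying the defining relations (the first one with denominators cleared;
   identities of polynomial functions, stated pointwise). *)
Definition is_iTASEP_family {R : realType} {n : nat} (a : nat -> R) (lam : cfg n)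
    (Psi : cfg n -> {mpoly R[n]}) : Prop :=
  (forall mu, mu \in Slam lam -> forall i : 'I_n, (mu i < mu (nxt i))%N ->
     forall x : 'I_n -> R,
       x i * (x (nxt i) - a (mu (nxt i))) * ((Psi mu).@[x] - (Psi mu).@[actv (sbar i) x])
       = a (mu (nxt i)) * (x i - x (nxt i)) * (Psi (actc (sbar i) mu)).@[x]) /\
  (forall mu, mu \in Slam lam -> forall i : 'I_n, mu i = mu (nxt i) ->
     forall x : 'I_n -> R, (Psi mu).@[actv (sbar i) x] = (Psi mu).@[x]) /\
  (forall mu, mu \in Slam lam ->
     forall x : 'I_n -> R, (Psi (actc ccyc mu)).@[actv ccyc x] = (Psi mu).@[x]).

(* Stones: rho j in {1,2} is the density of stone j; nondecreasing,
   first stone has density 1 and last has density 2. *)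
Definition stones_ok {n : nat} (rho : 'I_n -> nat) : Prop :=
  (forall j, rho j = 1%N \/ rho j = 2%N) /\
  (forall i j : 'I_n, (i <= j)%N -> (rho i <= rho j)%N) /\
  (exists j : 'I_n, nat_of_ord j = 0%N /\ rho j = 1%N) /\
  (exists j : 'I_n, nat_of_ord j = n.-1 /\ rho j = 2%N).

(* Omega: for each density d, the stones of density d appear in
   (stone_{sigma^-1(1)}, ..., stone_{sigma^-1(n)}) in the same cyclic order
   as in (stone_1, ..., stone_n). *)
Definition inOmega {n : nat} (rho : 'I_n -> nat) (sigma : {perm 'I_n}) : Prop :=
  forall d : nat,
    exists k : nat,
      rot k [seq j <- enum 'I_n | rho j == d]
      = [seq (sigma^-1)%g i | i <- enum 'I_n & rho ((sigma^-1)%g i) == d].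

Definition dens_lt {n : nat} (rho : 'I_n -> nat) (sigma : {perm 'I_n}) (i : 'I_n) : bool :=
  (rho ((sigma^-1)%g i) < rho ((sigma^-1)%g (nxt i)))%N.

Definition Kfrak {n : nat} (rho : 'I_n -> nat) (sigma : {perm 'I_n}) : nat :=
  #|[pred i : 'I_n | dens_lt rho sigma i]|.

Definition Paux {R : realType} {n : nat} (rho : 'I_n -> nat) (sigma tau : {perm 'I_n}) : R :=
  \sum_(i : 'I_n | dens_lt rho sigma i)
     (if tau == pcomp (sbar i) sigma then n%:R^-1 else 0)
  + (if tau == sigma then 1 - (Kfrak rho sigma)%:R / n%:R else 0).

Definition Pitasep {R : realType} {n : nat} (a : nat -> R) (p : 'I_n -> R)
    (rho : 'I_n -> nat) (mu : cfg n) (sigma : {perm 'I_n})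
    (mu' : cfg n) (sigma' : {perm 'I_n}) : R :=
  \sum_(i : 'I_n | dens_lt rho sigma i)
     (if (mu (nxt i) < mu i)%N then
        (if (mu' == actc (sbar i) mu) && (sigma' == pcomp (sbar i) sigma)
         then n%:R^-1 * p ((sigma^-1)%g i) * a (mu i) else 0)
        + (if (mu' == mu) && (sigma' == pcomp (sbar i) sigma)
           then n%:R^-1 * (1 - p ((sigma^-1)%g i) * a (mu i)) else 0)
      else
        (if (mu' == mu) && (sigma' == pcomp (sbar i) sigma) then n%:R^-1 else 0))
  + (if (mu' == mu) && (sigma' == sigma) then 1 - (Kfrak rho sigma)%:R / n%:R else 0).

Definition chi {R : realType} {n : nat} (rho : 'I_n -> nat) (p : 'I_n -> R) (Rz : R)
    : 'I_n -> R :=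
  fun j => if (rho j == 1%N) && (0 < p j) then (p j)^-1 else Rz.

Definition bigO_inv {R : realType} (g : R -> R) : Prop :=
  exists C z0 : R, forall z : R, z0 < z -> `|g z| <= C / z.

(* Main.v *)
Require Import Defs.
From HB Require Import structures.
From mathcomp Require Import all_boot all_order all_algebra all_fingroup.
From mathcomp Require Import reals.
From mathcomp Require Import mpoly.
From mathcomp Require Import ring lra.
From Stdlib Require Import FunctionalExtensionality.
Import Defs.
Import Order.TTheory GRing.Theory Num.Theory.
Local Open Scope ring_scope.

Section H.
Variables (n : nat) (rho : 'I_n -> nat) (s : {perm 'I_n}).

Lemma nxt_neq i : dens_lt rho s i -> nxt i != i.
Proof. by move=> h; apply/eqP => e; move: h; rewrite /dens_lt e ltnn. Qed.

Lemma sbar_injI i j : dens_lt rho s i -> dens_lt rho s j -> sbar i = sbar j -> i = j.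
Proof.
move=> hi hj e.
have := congr1 (fun w : {perm 'I_n} => w j) e; rewrite /= /sbar tpermL.
case: (eqVneq j i) => [//|nji].
case: (eqVneq j (nxt i)) => [ej|nj].
  subst j; rewrite tpermR => ei; move: hi hj; rewrite /dens_lt => h1 h2.
  by rewrite -ei in h2; have := ltn_trans h1 h2; rewrite ltnn.
rewrite tpermD 1?eq_sym // => e2; move: (@nxt_neq j hj); by rewrite -e2 eqxx.
Qed.

Lemma pcomp_inj (w1 w2 : {perm 'I_n}) : pcomp w1 s = pcomp w2 s -> w1 = w2.
Proof.
rewrite /pcomp => /permP h; apply/permP => x.
by have := h ((s^-1)%g x); rewrite !permM permKV.
Qed.

Lemma pcomp_ne i : dens_lt rho s i -> (pcomp (sbar i) s == s) = false.
Proof.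
move=> hi; apply/negbTE/eqP => e.
have : pcomp (sbar i) s = pcomp 1%g s by rewrite e /pcomp mulg1.
move/pcomp_inj/permP/(_ i); rewrite /sbar tpermL perm1 => ei.
by move: (@nxt_neq i hi); rewrite ei eqxx.
Qed.

End H.

Lemma actv_pcomp n T (w s : {perm 'I_n}) (y : 'I_n -> T) :
  actv (pcomp w s) y = actv w (actv s y).
Proof. by apply: functional_extensionality => j; rewrite /actv /pcomp invMg permM. Qed.

Lemma actv_sbar_i n T (i : 'I_n) (y : 'I_n -> T) : actv (sbar i) y i = y (nxt i).
Proof. by rewrite /actv /sbar tpermV tpermL. Qed.
Lemma actv_sbar_n n T (i : 'I_n) (y : 'I_n -> T) : actv (sbar i) y (nxt i) = y i.
Proof. by rewrite /actv /sbar tpermV tpermR. Qed.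
Lemma actv_sbarK n T (i : 'I_n) (y : 'I_n -> T) : actv (sbar i) (actv (sbar i) y) = y.
Proof. by apply: functional_extensionality => j; rewrite /actv /sbar tpermV tpermK. Qed.
Lemma actv_sbar_eq n T (i : 'I_n) (y : 'I_n -> T) : y i = y (nxt i) -> actv (sbar i) y = y.
Proof.
move=> e; apply: functional_extensionality => j; rewrite /actv /sbar tpermV.
by case: tpermP => [->|->|].
Qed.

Lemma actc_i n (i : 'I_n) (m : cfg n) : actc (sbar i) m i = m (nxt i).
Proof. by rewrite /actc ffunE /sbar tpermV tpermL. Qed.
Lemma actc_n n (i : 'I_n) (m : cfg n) : actc (sbar i) m (nxt i) = m i.
Proof. by rewrite /actc ffunE /sbar tpermV tpermR. Qed.
Lemma actcK n (i : 'I_n) (m : cfg n) : actc (sbar i) (actc (sbar i) m) = m.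
Proof. by apply/ffunP => j; rewrite /actc !ffunE /sbar tpermV tpermK. Qed.
Lemma actc_eq n (i : 'I_n) (m : cfg n) : m i = m (nxt i) -> actc (sbar i) m = m.
Proof.
move=> e; apply/ffunP => j; rewrite /actc ffunE /sbar tpermV.
by case: tpermP => [->|->|].
Qed.
Lemma actc_Slam n (i : 'I_n) (lam m : cfg n) : m \in Slam lam -> actc (sbar i) m \in Slam lam.
Proof.
rewrite /Slam !mem_undup => /mapP[w _ ->]; apply/mapP; exists (w * sbar i)%g; first by rewrite mem_enum.
by apply/ffunP => j; rewrite /actc !ffunE invMg permM.
Qed.

Lemma sum_two (R : realType) (T : eqType) (r : seq T) (F : T -> R) x y :
  uniq r -> x \in r -> y \in r -> (forall z, z \in r -> z != x -> z != y -> F z = 0) ->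
  \sum_(z <- r) F z = F x + (if y == x then 0 else F y).
Proof.
move=> ur xr yr h; rewrite (bigD1_seq x) //=; congr (_ + _).
case: eqP => [eyx|/eqP nyx].
  by subst y; rewrite big1_seq // => z /andP[zx zr]; apply: h.
rewrite -big_filter (bigD1_seq y) ?filter_uniq ?mem_filter ?nyx //=.
rewrite big1_seq ?addr0 // => z /andP[zy]; rewrite mem_filter => /andP[zx zr]; exact: h.
Qed.

Lemma bigO_frac (R : realType) (c b : R) : 0 <= b < 1 -> bigO_inv (fun w => c / (w - b)).
Proof.
move=> /andP[b0 b1]; exists (2 * `|c|), 2 => z hz.
have zb : 0 < z - b by rewrite subr_gt0; apply: lt_trans hz; apply: lt_trans b1 _; rewrite ltr1n.
have z0 : 0 < z by apply: lt_trans hz.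
rewrite normrM normfV (gtr0_norm zb) -subr_ge0.
have -> : 2 * `|c| / z - `|c| / (z - b) = `|c| * ((z - 2 * b) / (z * (z - b))).
  by field; rewrite ?gt_eqF // mulr_gt0.
apply: mulr_ge0 => //; apply: divr_ge0; last by apply: mulr_ge0; apply: ltW.
rewrite subr_ge0; apply: le_trans (ltW hz).
have : b <= 1 by apply: ltW. lra.
Qed.

Lemma bigO0 (R : realType) : bigO_inv (fun _ : R => 0).
Proof. by exists 0, 0 => z _; rewrite normr0 mul0r. Qed.

Lemma algL (R : realFieldType) (nn q A Y M M' N : R) : nn != 0 -> q != 0 -> Y - A != 0 ->
  q^-1 * (Y - A) * (M - M') = A * (q^-1 - Y) * N ->
  nn^-1 * (M * (1 + 0)) + nn^-1 * q * A * (N * (1 + (q * A - 1) / q / (Y - A))) = M' * nn^-1.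
Proof.
move=> n0 q0 yA e.
have hM' : M' = M - A * (1 - q * Y) * N / (Y - A).
  apply/eqP; rewrite -subr_eq0.
  have -> : M' - (M - A * (1 - q * Y) * N / (Y - A)) =
     -(q / (Y - A)) * (q^-1 * (Y - A) * (M - M') - A * (q^-1 - Y) * N) by field; rewrite ?q0 ?yA ?n0 ?A0.
  by rewrite e subrr mulr0.
by rewrite hM'; field; rewrite ?q0 ?yA ?n0.
Qed.

Lemma algG (R : realFieldType) (nn q A Y M M' P P' : R) : nn != 0 -> q != 0 -> Y - A != 0 -> A != 0 ->
  q^-1 * (Y - A) * (P - P') = A * (q^-1 - Y) * M ->
  Y * (q^-1 - A) * (P' - P) = A * (Y - q^-1) * M' ->
  (q^-1 = Y -> M' = M) ->
  M' = Y * (1 - q * A) * M / (Y - A).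
Proof.
move=> n0 q0 yA A0 e1 e2 heq.
have [eY|nY] := eqVneq (q^-1) Y.
  rewrite heq //; rewrite -eY in yA *; field; rewrite q0 /=; apply/eqP => h; move/eqP: yA; apply.
  transitivity (q^-1 * (1 + - A * q)); [by field; rewrite ?q0 | by rewrite h mulr0].
have k : A * (q^-1 - Y) * (q^-1 * (Y - A) * M' - Y * (q^-1 - A) * M) = 0.
  transitivity (q^-1 * (Y - A) * (-(A * (Y - q^-1) * M')) - Y * (q^-1 - A) * (A * (q^-1 - Y) * M)).
    by ring.
  rewrite -e1 -e2; ring.
move/eqP: k; rewrite mulf_eq0 mulf_eq0 (negbTE A0) subr_eq0 (negbTE nY) /= => /eqP k.
apply/eqP; rewrite -subr_eq0.
have -> : M' - Y * (1 - q * A) * M / (Y - A) =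
   q / (Y - A) * (q^-1 * (Y - A) * M' - Y * (q^-1 - A) * M) by field; rewrite ?q0 ?yA ?n0 ?A0.
by rewrite k mulr0.
Qed.

Theorem lemma6p2 (R : realType) (n : nat) (a : nat -> R) (lam : {ffun 'I_n -> nat})
    (Psi : {ffun 'I_n -> nat} -> {mpoly R[n]})
    (rho : 'I_n -> nat) (p : 'I_n -> R)
    (mu : {ffun 'I_n -> nat}) (sigma sigmah : {perm 'I_n}) :
  (forall k, 0 < a k < 1) ->
  nondecr lam ->
  is_iTASEP_family a lam Psi ->
  stones_ok rho ->
  (forall j, rho j = 1%N -> 0 <= p j < 1) ->
  mu \in Slam lam ->
  inOmega rho sigma ->
  inOmega rho sigmah ->
  0 < Paux (R:=R) rho sigmah sigma ->
  exists g : {ffun 'I_n -> nat} -> R -> R,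
    (forall muh, muh \in Slam lam -> bigO_inv (g muh)) /\
    (forall Rz : R, 1 < Rz ->
       \sum_(muh <- Slam lam)
          Pitasep a p rho muh sigmah mu sigma
          * (Psi muh).@[actv sigmah (chi rho p Rz)] * (1 + g muh Rz)
       = (Psi mu).@[actv sigma (chi rho p Rz)] * Paux (R:=R) rho sigmah sigma).
Proof.
move=> ha _ [H1 [H2 _]] [hr _] hp hmu _ _ _.
case: (pickP (fun i => dens_lt rho sigmah i && (sigma == pcomp (sbar i) sigmah)))
  => [i /andP[hi /eqP hsig] | hnone]; last first.
  exists (fun _ _ => 0); split => [muh _|Rz _]; first exact: bigO0.
  have hP : forall muh, Pitasep a p rho muh sigmah mu sigma =
      if (mu == muh) && (sigma == sigmah) then 1 - (Kfrak rho sigmah)%:R / n%:R else 0.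
    move=> muh; rewrite /Pitasep big1 ?add0r // => j hj.
    by have := hnone j; rewrite /= hj /= => ->; rewrite !andbF; case: ifP => _; rewrite ?addr0.
  have hA : Paux (R:=R) rho sigmah sigma =
      if sigma == sigmah then 1 - (Kfrak rho sigmah)%:R / n%:R else 0.
    by rewrite /Paux big1 ?add0r // => j hj; have := hnone j; rewrite /= hj /= => ->.
  rewrite hA; under eq_bigr do rewrite hP.
  case: eqP => [->|_]; last by rewrite mulr0 big1 // => muh _; rewrite andbF !mul0r.
  rewrite (bigD1_seq mu) ?undup_uniq //= eqxx /= big1 => [|muh hm].
    by rewrite addr0 addr0 mulr1 mulrC.
  by rewrite eq_sym (negbTE hm) !mul0r.
subst sigma.
have n0 : (0 < n)%N := leq_ltn_trans (leq0n i) (ltn_ord i).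
have nR : (n%:R : R) != 0 by rewrite pnatr_eq0 -lt0n.
have hneq : forall j, dens_lt rho sigmah j -> j != i ->
    (pcomp (sbar i) sigmah == pcomp (sbar j) sigmah) = false.
  move=> j hj ji; apply/negbTE/eqP => /pcomp_inj e.
  by move: ji; rewrite (@sbar_injI _ _ _ _ _ hi hj e) eqxx.
have [hr1 hr2] : rho ((sigmah^-1)%g i) = 1%N /\ rho ((sigmah^-1)%g (nxt i)) = 2%N.
  move: hi; rewrite /dens_lt.
  by case: (hr ((sigmah^-1)%g i)) => ->; case: (hr ((sigmah^-1)%g (nxt i))) => ->.
set q := p ((sigmah^-1)%g i).
have hq : 0 <= q < 1 := hp _ hr1.
pose x (Rz : R) := actv sigmah (chi rho p Rz).
have hxi : forall Rz, x Rz i = if 0 < q then q^-1 else Rz.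
  by move=> Rz; rewrite /x /actv /chi hr1 eqxx.
have hxn : forall Rz, x Rz (nxt i) = Rz.
  by move=> Rz; rewrite /x /actv /chi hr2.
have hpt : Paux (R:=R) rho sigmah (pcomp (sbar i) sigmah) = n%:R^-1.
  rewrite /Paux (bigD1 i) //= eqxx big1 => [|j /andP[hj ji]]; last by rewrite hneq.
  by rewrite (@pcomp_ne _ _ _ _ hi) !addr0.
pose T := fun muh : cfg n => if (muh (nxt i) < muh i)%N then
   (if mu == actc (sbar i) muh then n%:R^-1 * q * a (muh i) else 0) +
   (if mu == muh then n%:R^-1 * (1 - q * a (muh i)) else 0)
  else (if mu == muh then n%:R^-1 else 0).
have hPit : forall muh, Pitasep a p rho muh sigmah mu (pcomp (sbar i) sigmah) = T muh.
  move=> muh; rewrite /Pitasep (bigD1 i) //= eqxx !andbT (@pcomp_ne _ _ _ _ hi) !andbF addr0.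
  rewrite big1 ?addr0 // => j /andP[hj ji]; rewrite hneq // !andbF.
  by case: ifP => _; rewrite ?addr0.
have hnu : actc (sbar i) mu \in Slam lam := @actc_Slam _ i _ _ hmu.
have hT0 : forall z, z \in Slam lam -> z != mu -> z != actc (sbar i) mu -> T z = 0.
  move=> z _ zm zn; rewrite /T.
  have -> : (mu == actc (sbar i) z) = false.
    by apply/negbTE/eqP => e; move: zn; rewrite e actcK eqxx.
  by rewrite eq_sym (negbTE zm) addr0; case: ifP.
have hsum : forall F : cfg n -> R, \sum_(muh <- Slam lam) T muh * F muh =
    T mu * F mu + (if actc (sbar i) mu == mu then 0 else T (actc (sbar i) mu) * F (actc (sbar i) mu)).
  move=> F; apply: sum_two; rewrite ?undup_uniq // => z zs zm zn; by rewrite hT0 // mul0r.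
have hA : forall k, 0 <= a k < 1 by move=> k; have /andP[h1 h2] := ha k; rewrite h2 ltW.
have hYA : forall Rz k, 1 < Rz -> Rz - a k != 0.
  move=> Rz k hR; rewrite gt_eqF // subr_gt0; apply: lt_trans _ hR.
  by have /andP[_ ->] := ha k.
have hA0 : forall k, a k != 0 by move=> k; have /andP[h _] := ha k; rewrite gt_eqF.
have red : forall (g : cfg n -> R -> R) Rz,
  \sum_(muh <- Slam lam) Pitasep a p rho muh sigmah mu (pcomp (sbar i) sigmah)
     * (Psi muh).@[x Rz] * (1 + g muh Rz) =
  T mu * ((Psi mu).@[x Rz] * (1 + g mu Rz)) +
  (if actc (sbar i) mu == mu then 0 else
     T (actc (sbar i) mu) * ((Psi (actc (sbar i) mu)).@[x Rz] * (1 + g (actc (sbar i) mu) Rz))).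
  move=> g Rz.
  transitivity (\sum_(muh <- Slam lam) T muh * ((Psi muh).@[x Rz] * (1 + g muh Rz))).
    by apply: eq_bigr => muh _; rewrite hPit mulrA.
  exact: (hsum (fun muh => (Psi muh).@[x Rz] * (1 + g muh Rz))).
have q0E : ~~ (0 < q) -> q = 0.
  by move=> qn; apply/eqP; rewrite eq_le leNgt qn (andP hq).1.
have exE : forall Rz, ~~ (0 < q) -> actv (sbar i) (x Rz) = x Rz.
  by move=> Rz qn; apply: actv_sbar_eq; rewrite hxi (negbTE qn) hxn.
case: (ltngtP (mu i) (mu (nxt i))) => cmp.
- have hnm : (actc (sbar i) mu == mu) = false.
    apply/negbTE/eqP => e; have := congr1 (fun f : cfg n => f i) e.
    by rewrite /= actc_i => e'; move: cmp; rewrite e' ltnn.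
  have hnm' : (mu == actc (sbar i) mu) = false by rewrite eq_sym hnm.
  have hTmu : T mu = n%:R^-1 by rewrite /T ltnNge (ltnW cmp) /= eqxx.
  have hTnu : T (actc (sbar i) mu) = n%:R^-1 * q * a (mu (nxt i)).
    by rewrite /T actc_i actc_n cmp actcK eqxx hnm' addr0.
  have [qp|qn] := boolP (0 < q).
    pose g := (fun z => if z == actc (sbar i) mu then
      (fun w => ((q * a (mu (nxt i)) - 1) / q) / (w - a (mu (nxt i)))) else (fun _ => 0)).
    exists g.
    split => [muh _|Rz hR].
      by rewrite /g; case: (muh == _); [apply: bigO_frac | apply: bigO0].
    rewrite (red g Rz) actv_pcomp hpt hnm hTmu hTnu /g /= eqxx hnm'.
    have := H1 mu hmu i cmp (x Rz); rewrite hxi qp hxn => e.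
    by apply: algL => //; [rewrite gt_eqF | apply: hYA].
  pose g := (fun (_ : cfg n) (_ : R) => 0 : R).
  exists g; split=> [? _|Rz hR]; first exact: bigO0.
  rewrite (red g Rz) actv_pcomp hpt (exE Rz qn) hnm hTmu hTnu (q0E qn) /g; ring.
- have hnm : (actc (sbar i) mu == mu) = false.
    apply/negbTE/eqP => e; have := congr1 (fun f : cfg n => f i) e.
    by rewrite /= actc_i => e'; move: cmp; rewrite e' ltnn.
  have hnm' : (mu == actc (sbar i) mu) = false by rewrite eq_sym hnm.
  have hTmu : T mu = n%:R^-1 * (1 - q * a (mu i)) by rewrite /T cmp hnm' eqxx add0r.
  have hTnu : T (actc (sbar i) mu) = 0.
    by rewrite /T actc_i actc_n ltnNge (ltnW cmp) /= hnm'.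
  have [qp|qn] := boolP (0 < q).
    pose g := (fun (_ : cfg n) w => a (mu i) / (w - a (mu i))).
    exists g.
    split => [muh _|Rz hR]; first exact: bigO_frac.
    rewrite (red g Rz) actv_pcomp hpt hnm hTmu hTnu mul0r addr0 /g.
    have hlt : (actc (sbar i) mu i < actc (sbar i) mu (nxt i))%N by rewrite actc_i actc_n.
    have e1 := H1 _ hnu i hlt (x Rz).
    rewrite actc_n actcK hxi qp hxn in e1.
    have e2 := H1 _ hnu i hlt (actv (sbar i) (x Rz)).
    rewrite actc_n actcK actv_sbar_i actv_sbar_n actv_sbarK hxi qp hxn in e2.
    have heq : q^-1 = Rz -> (Psi mu).@[actv (sbar i) (x Rz)] = (Psi mu).@[x Rz].
      by move=> eq; rewrite actv_sbar_eq // hxi qp hxn.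
    have hq0 : q != 0 by rewrite gt_eqF.
    rewrite (@algG _ _ _ _ _ _ _ _ _ nR hq0 (hYA _ _ hR) (hA0 _) e1 e2 heq).
    by field; rewrite ?nR ?(hYA _ _ hR).
  pose g := (fun (_ : cfg n) (_ : R) => 0 : R).
  exists g; split=> [? _|Rz hR]; first exact: bigO0.
  by rewrite (red g Rz) actv_pcomp hpt (exE Rz qn) hnm hTmu hTnu (q0E qn) /g; ring.
- have e := @actc_eq _ _ _ cmp.
  pose g := (fun (_ : cfg n) (_ : R) => 0 : R).
  exists g; split=> [? _|Rz hR]; first exact: bigO0.
  rewrite (red g Rz) actv_pcomp hpt e eqxx addr0 (H2 mu hmu i cmp) /T cmp ltnn eqxx.
  by rewrite addr0 mulr1 mulrC.
Qed.
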